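(* Let $N\ge 1$ and let $J$ be a persymmetric Jacobi matrix of order $N+1$ that realizes perfect state transfer, with eigenvalues $\lambda_0<\lambda_1<\dots<\lambda_N$ satisfying \[\lambda_1-\lambda_0=\lambda_2-\lambda_1=\dots=\lambda_N-\lambda_{N-1}.\] Then $J$ does not have Early State Exclusion: if $T_0$ is the earliest positive time at which $J$ realizes perfect state transfer, there is no $t\in(0,T_0)$ with $(e^{-iJt}\mathbf{e}_0,\mathbf{e}_0)_{\mathbb{C}^{N+1}}=0$.
   Context: A Jacobi matrix of order $N+1$ is a real symmetric tridiagonal $(N+1)\times(N+1)$ matrix $J$ with diagonal entries $a_0,\dots,a_N\in\mathbb{R}$ and off-diagonal entries $b_0,\dots,b_{N-1}>0$. It is persymmetric if $a_k=a_{N-k}$ for $k=0,\dots,N$ and $b_l=b_{N-1-l}$ for $l=0,\dots,N-1$. Let $\mathbf{e}_0,\dots,\mathbf{e}_N$ be the standard basis of $\mathbb{C}^{N+1}$. $J$ realizes perfect state transfer (PST) at time $T>0$ if $e^{-iTJ}\mathbf{e}_0=e^{i\phi}\mathbf{e}_N$ for some $\phi\in\mathbb{R}$. If $T_0$ is the earliest (smallest positive) such time, $J$ is said to have Early State Exclusion (ESE) at time $t$ if $0<t<T_0$ and $(e^{-iJt}\mathbf{e}_0,\mathbf{e}_0)_{\mathbb{C}^{N+1}}=0$. *)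

(* Defs.v *)
From HB Require Import structures.
From mathcomp Require Import all_boot all_order all_algebra.
From mathcomp Require Import complex.
From mathcomp Require Import all_classical all_reals all_analysis.
Set Implicit Arguments. Unset Strict Implicit. Unset Printing Implicit Defensive.
Import Order.TTheory GRing.Theory Num.Theory ComplexField.
Import numFieldNormedType.Exports.
Local Open Scope ring_scope.
Local Open Scope complex_scope.

Definition expmx (R : realType) (n : nat) (A : 'M[R[i]]_n.+1) : 'M[R[i]]_n.+1 :=
  limn (fun m : nat => \sum_(k < m) ((k`!)%:R^-1 : R[i]) *: A ^+ k).

Definition jacobi (R : realType) (N : nat) (a b : nat -> R) : 'M[R]_N.+1 :=
  \matrix_(i, j) (if i == j then a i
                  else if (j : nat) == i.+1 then b i
                  else if (i : nat) == j.+1 then b j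
                  else 0).

Definition jacobi_params (R : realType) (N : nat) (a b : nat -> R) : Prop :=
  forall l, (l < N)%N -> 0 < b l.

Definition persymmetric_params (R : realType) (N : nat) (a b : nat -> R) : Prop :=
  (forall k, (k <= N)%N -> a k = a (N - k)%N) /\
  (forall l, (l < N)%N -> b l = b (N.-1 - l)%N).

Definition cmx (R : realType) (N : nat) (J : 'M[R]_N.+1) : 'M[R[i]]_N.+1 :=
  map_mx (fun x : R => x%:C) J.

Definition evec {R : realType} {N : nat} (k : 'I_N.+1) : 'cV[R[i]]_N.+1 :=
  delta_mx k 0.

Definition cinner (R : realType) (N : nat) (u v : 'cV[R[i]]_N.+1) : R[i] :=
  \sum_i u i 0 * (v i 0)^*.

Definition evol (R : realType) (N : nat) (J : 'M[R]_N.+1) (t : R) : 'M[R[i]]_N.+1 :=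
  expmx ((- 'i * t%:C) *: cmx J).

Definition PST_at (R : realType) (N : nat) (J : 'M[R]_N.+1) (T : R) : Prop :=
  0 < T /\ exists phi : R,
    evol J T *m evec 0 = (cos phi +i* sin phi) *: evec ord_max.

Definition earliest_PST (R : realType) (N : nat) (J : 'M[R]_N.+1) (T0 : R) : Prop :=
  PST_at J T0 /\ forall T, PST_at J T -> T0 <= T.

Definition ESE_at (R : realType) (N : nat) (J : 'M[R]_N.+1) (T0 t : R) : Prop :=
  0 < t /\ t < T0 /\ cinner (evol J t *m evec 0) (evec 0) = 0.

(* Main.v *)
Require Import Defs.
From HB Require Import structures.
From mathcomp Require Import all_boot all_order all_algebra.
From mathcomp Require Import complex.
From mathcomp Require Import all_classical all_reals all_analysis.
From mathcomp Require Import zify ring lra.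
Import Order.TTheory GRing.Theory Num.Theory.
Local Open Scope ring_scope.

Module Helpers.
Local Open Scope ring_scope.

Lemma size_ie n : size (index_enum 'I_n) = n.
Proof. by rewrite -[RHS]card_ord cardT enumT /index_enum unlock. Qed.

Section Spectral.
Variable R : fieldType.
Variable n : nat.
Variable J : 'M[R]_n.+1.
Variable lam : 'I_n.+1 -> R.
Hypothesis lam_inj : injective lam.
Hypothesis eig : forall i, eigenvalue J (lam i).

Definition Qp (j : 'I_n.+1) : {poly R} := \prod_(i < n.+1 | i != j) ('X - (lam i)%:P).
Definition Dj (j : 'I_n.+1) : R := \prod_(i < n.+1 | i != j) (lam j - lam i).
Definition Lp j := (Dj j)^-1 *: Qp j.
Definition Pm j := horner_mx J (Lp j).
Definition Pip : {poly R} := \prod_(i < n.+1) ('X - (lam i)%:P).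

Lemma charE : char_poly J = Pip.
Proof.
have hroots : all (root (char_poly J)) [seq lam i | i <- index_enum 'I_n.+1].
  by apply/allP => x /mapP [i _ ->]; rewrite -eigenvalue_root_char; exact: eig.
have huniq : uniq_roots [seq lam i | i <- index_enum 'I_n.+1].
  by rewrite uniq_rootsE map_inj_uniq // index_enum_uniq.
have hd := uniq_roots_dvdp hroots huniq.
rewrite big_map in hd.
apply/eqP; rewrite -eqp_monic ?char_poly_monic ?monic_prod_XsubC //.
rewrite /Pip eqp_sym -dvdp_size_eqp // size_char_poly size_prod_XsubC.
by rewrite size_ie.
Qed.

Lemma hPi : horner_mx J Pip = 0.
Proof. by rewrite -charE Cayley_Hamilton. Qed.

Lemma Pi_split j : Pip = ('X - (lam j)%:P) * Qp j.
Proof. by rewrite /Pip (bigD1 j). Qed.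

Lemma Dj_neq0 j : Dj j != 0.
Proof.
rewrite /Dj; apply/prodf_neq0 => i hij.
by rewrite subr_eq0; apply/eqP => /lam_inj h; move: hij; rewrite h eqxx.
Qed.

Lemma hornerQ j i : (Qp j).[lam i] = if i == j then Dj j else 0.
Proof.
rewrite /Qp horner_prod; case: eqP => [->|/eqP hij].
  by apply: eq_bigr => k _; rewrite hornerXsubC.
by rewrite (bigD1 i) //= hornerXsubC subrr mul0r.
Qed.

Lemma hornerL j i : (Lp j).[lam i] = (i == j)%:R.
Proof.
rewrite /Lp hornerZ hornerQ; case: eqP => _; last by rewrite mulr0.
by rewrite mulVf // Dj_neq0.
Qed.

Lemma size_Qp j : size (Qp j) = n.+1.
Proof.
have hQ : Qp j != 0 by apply: monic_neq0; apply: monic_prod_XsubC.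
have h : size Pip = size (('X - (lam j)%:P) * Qp j) by rewrite -Pi_split.
rewrite /Pip size_prod_XsubC size_ie size_mul ?polyXsubC_eq0 // in h.
by rewrite size_XsubC in h; case: h.
Qed.

Lemma Qp_monic j : Qp j \is monic.
Proof. exact: monic_prod_XsubC. Qed.

Lemma size_Lp j : (size (Lp j) <= n.+1)%N.
Proof. by rewrite /Lp (leq_trans (size_scale_leq _ _)) // size_Qp. Qed.

Lemma sumL : \sum_j Lp j = 1.
Proof.
apply/eqP; rewrite -subr_eq0; apply/eqP.
set F := _ - _.
apply/eqP; apply/negPn/negP => hF.
have hroots : all (root F) [seq lam i | i <- index_enum 'I_n.+1].
  apply/allP => x /mapP [i _ ->]; rewrite /root /F hornerD hornerN horner_sum hornerC.
  rewrite (bigD1 i) //= hornerL eqxx big1 ?addr0 ?subrr //.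
  by move=> k hk; rewrite hornerL eq_sym (negbTE hk).
have := max_poly_roots hF hroots.
rewrite map_inj_uniq // index_enum_uniq size_map size_ie => /(_ isT).
apply/negP; rewrite -leqNgt /F.
apply: (leq_trans (size_add _ _)); rewrite geq_max size_opp size_poly1 andbT.
elim/big_ind: _ => //; first by rewrite size_poly0.
  by move=> p q hp hq; apply: (leq_trans (size_add _ _)); rewrite geq_max hp hq.
by move=> i _; apply: size_Lp.
Qed.

Lemma PJ q j : horner_mx J q * Pm j = q.[lam j] *: Pm j.
Proof.
rewrite {1}(divp_eq q ('X - (lam j)%:P)) modp_XsubC rmorphD rmorphM /= horner_mx_C.
rewrite mulrDl -mulrA /Pm /Lp linearZ /= -scalerAr -rmorphM /= -Pi_split hPi.
by rewrite scaler0 mulr0 add0r -mulmxE mul_scalar_mx.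
Qed.

Lemma sumP : \sum_j Pm j = 1.
Proof. by rewrite /Pm -rmorph_sum sumL rmorph1. Qed.

Lemma Jpow m : J ^+ m = \sum_j (lam j ^+ m) *: Pm j.
Proof.
rewrite -[LHS]mulr1 -sumP mulr_sumr; apply: eq_bigr => j _.
have -> : J ^+ m = horner_mx J ('X ^+ m) by rewrite rmorphXn /= horner_mx_X.
by rewrite PJ hornerXn.
Qed.

Lemma PP i j : Pm i * Pm j = (i == j)%:R *: Pm j.
Proof. by rewrite {1}/Pm PJ hornerL eq_sym. Qed.

Lemma horner_mx_tr (A : 'M[R]_n.+1) p : (horner_mx A p)^T = horner_mx A^T p.
Proof.
elim/poly_ind: p => [|p c IH]; first by rewrite !rmorph0 trmx0.
rewrite !rmorphD !rmorphM /= !horner_mx_X !horner_mx_C linearD /= -!mulmxE trmx_mul IH.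
by rewrite tr_scalar_mx; congr (_ + _); apply: comm_mx_horner.
Qed.

End Spectral.

Lemma horner_mx_sum (R : comNzRingType) k (A : 'M[R]_k.+1) (p : {poly R}) :
  horner_mx A p = \sum_(i < size p) p`_i *: A ^+ i.
Proof.
rewrite -{1}[p]coefK poly_def rmorph_sum; apply: eq_bigr => i _.
by rewrite -mul_polyC rmorphM /= horner_mx_C rmorphXn /= horner_mx_X -mulmxE mul_scalar_mx.
Qed.

Lemma horner_mx_sumn (R : comNzRingType) k (A : 'M[R]_k.+1) (p : {poly R}) :
  horner_mx A p = \sum_(0 <= i < size p) p`_i *: A ^+ i.
Proof. by rewrite horner_mx_sum big_mkord. Qed.

Section Jac.
Variable R : realType.
Variable n : nat.
Variables a b : nat -> R.
Local Notation J := (jacobi n a b).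

Lemma jac_sym : J^T = J.
Proof.
apply/matrixP => i j; rewrite !mxE.
case: (eqVneq i j) => [->|hij] //.
have hn : ~~ (((j:nat) == i.+1) && ((i:nat) == j.+1)) by apply/negP => /andP [/eqP h1 /eqP h2]; lia.
by case: ((j:nat) == i.+1) hn; case: ((i:nat) == j.+1).
Qed.

Lemma jpow0 m (i : 'I_n.+1) : (m < i)%N -> (J ^+ m) i 0 = 0.
Proof.
elim: m i => [|m IH] i hi.
  by rewrite expr0 mxE; case: eqP => // h; move: hi; rewrite h.
rewrite exprS -mulmxE mxE big1 // => l _.
case: (ltnP m l) => hl; first by rewrite IH // mulr0.
rewrite mxE.
have h1 : (i == l) = false by apply/eqP => h; move: hi hl; rewrite h; lia.
have h2 : ((l:nat) == i.+1) = false by apply/eqP; lia.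
have h3 : ((i:nat) == l.+1) = false by apply/eqP; lia.
by rewrite h1 h2 h3 mul0r.
Qed.

Lemma jpowm m : (m <= n)%N -> (J ^+ m) (inord m) 0 = \prod_(l < m) b l.
Proof.
elim: m => [|m IH] hm.
  rewrite expr0 big_ord0 mxE; have -> : (inord 0 : 'I_n.+1) = 0 by apply: ord_inj; rewrite inordK.
  by rewrite eqxx.
rewrite exprS -mulmxE mxE (bigD1 (inord m)) //= IH ?(ltnW hm) //.
rewrite addrC big1 ?add0r.
  rewrite mxE !inordK //; last by apply: (leq_trans (ltnW hm)).
  have h1 : (inord m.+1 == inord m :> 'I_n.+1) = false.
    by apply/eqP => /(congr1 val) /=; rewrite !inordK //; lia.
  rewrite h1 /= eqxx.
  have h2 : (m == m.+2)%N = false by lia.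
  rewrite h2.
  by rewrite big_ord_recr /= mulrC.
move=> l hl.
case: (ltnP m l) => hl2; first by rewrite jpow0 // mulr0.
rewrite mxE.
have hl3 : (l < m)%N.
  rewrite ltn_neqAle hl2 andbT; apply/eqP => h; move: hl; rewrite -h.
  by rewrite (_ : inord l = l) ?eqxx //; apply: ord_inj; rewrite inordK.
rewrite inordK; last by lia.
have h1 : (inord m.+1 == l) = false.
  by apply/eqP => /(congr1 val) /=; rewrite inordK //; lia.
have h2 : ((l:nat) == m.+2) = false by apply/eqP; lia.
have h3 : (m.+1 == l.+1)%N = false by apply/eqP; lia.
by rewrite h1 h2 h3 mul0r.
Qed.

Variable lam : 'I_n.+1 -> R.
Hypothesis lam_inj : injective lam.
Hypothesis eig : forall i, eigenvalue J (lam i).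
Local Notation P := (Pm R n J lam).

Lemma P_N0 j : (P j) ord_max 0 = (Dj R n lam j)^-1 * \prod_(l < n) b l.
Proof.
have hD : Dj R n lam j != 0 := Dj_neq0 R n lam lam_inj j.
have hs : size (Lp R n lam j) = n.+1 by rewrite /Lp size_scale ?invr_eq0 // size_Qp.
rewrite /Pm horner_mx_sumn summxE hs big_nat_recr //= big1_seq ?add0r.
  rewrite mxE coefZ.
  have -> : (Qp R n lam j)`_n = 1.
    by have := Qp_monic R n lam j; rewrite qualifE /= lead_coefE size_Qp => /eqP.
  have -> : (ord_max : 'I_n.+1) = inord n by apply: ord_inj; rewrite inordK.
  by rewrite jpowm // mulr1.
move=> i; rewrite mem_index_iota => /andP [_ hi].
by rewrite mxE jpow0 ?mulr0.
Qed.

Lemma P_sym j : (P j)^T = P j.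
Proof. by rewrite /Pm horner_mx_tr jac_sym. Qed.

Lemma P00_ge0 j : 0 <= (P j) 0 0.
Proof.
have h := PP R n J lam lam_inj eig j j.
rewrite eqxx scale1r in h.
rewrite -h -mulmxE mxE; apply: sumr_ge0 => l _.
have -> : P j 0 l = (P j)^T l 0 by rewrite mxE.
by rewrite P_sym -expr2 sqr_ge0.
Qed.

End Jac.

Section Comb.
Variable R : comRingType.

Lemma fact_prod_rev m : \prod_(0 <= i < m) ((m%:R - i%:R) : R) = (m`!)%:R.
Proof.
elim: m => [|m IH]; first by rewrite big_geq // fact0.
rewrite big_nat_recl // subr0.
rewrite (eq_bigr (fun i => (m%:R - i%:R : R))); last first.
  by move=> i _; rewrite !mulrS; ring.
by rewrite IH factS natrM.
Qed.

Lemma prod_neg m j : \prod_(0 <= k < m) ((j%:R - (k + j.+1)%:R) : R) = (-1)^+m * (m`!)%:R.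
Proof.
elim: m => [|m IH]; first by rewrite big_geq // fact0 expr0 mulr1.
rewrite big_nat_recr //= IH factS natrM exprS.
have -> : (m + j.+1)%N = (m.+1 + j)%N by lia.
rewrite natrD; ring.
Qed.

Lemma Dprod N (j : 'I_N.+1) :
  \prod_(i < N.+1 | i != j) ((j:nat)%:R - (i:nat)%:R : R) = (-1)^+(N - j) * ((j`! * (N - j)`!)%:R).
Proof.
rewrite (eq_bigl (fun i : 'I_N.+1 => (i:nat) != j)) //.
rewrite -(big_mkord (fun i => i != j) (fun i => ((j:nat)%:R - i%:R : R))).
rewrite big_mkcond (@big_cat_nat _ _ _ j 0 N.+1) ?(ltnW (ltn_ord j)) //=.
rewrite [\prod_(j <= i < N.+1) _]big_ltn ?ltn_ord //= eqxx mul1r.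
rewrite (eq_big_nat _ _ (F2 := fun i => ((j:nat)%:R - i%:R : R))); last first.
  by move=> i /andP [_ hi]; rewrite ifT //; apply/eqP; lia.
rewrite fact_prod_rev.
rewrite (eq_big_nat _ _ (F2 := fun i => ((j:nat)%:R - i%:R : R))); last first.
  by move=> i /andP [hi _]; rewrite ifT //; apply/eqP; lia.
rewrite -{1}(add0n j.+1) big_addn subSS prod_neg natrM; ring.
Qed.

End Comb.

Import numFieldTopology.Exports numFieldNormedType.Exports ComplexField.
Local Open Scope classical_set_scope.

Lemma cvg_bigsum {K : numFieldType} {V : normedModType K} (I : Type) (r : seq I)
  (f : I -> nat -> V) (l : I -> V) :
  (forall i, f i @ \oo --> l i) ->
  (fun M => \sum_(i <- r) f i M) @ \oo --> \sum_(i <- r) l i.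
Proof.
move=> h; elim: r => [|x r IH].
  rewrite big_nil (_ : (fun _ => _) = fun _ => 0); first exact: cvg_cst.
  by apply/funext => M; rewrite big_nil.
rewrite big_cons (_ : (fun _ => _) = (f x + (fun M => \sum_(i <- r) f i M))).
  exact: cvgD.
by apply/funext => M; rewrite big_cons.
Qed.

Section Cplx.
Variable R : realType.
Local Open Scope complex_scope.

Definition CC := Num.NumField.sort (R[i] : numFieldType).
Definition Ex (x : R) : R[i] := cos x +i* sin x.

Lemma ExE x : Ex x = (cos x)%:C + 'i * (sin x)%:C.
Proof. by rewrite {1}[Ex x]complexE. Qed.

Lemma ExD x y : Ex (x + y) = Ex x * Ex y.
Proof.
rewrite /Ex cosD sinD /=; congr (_ +i* _); ring.
Qed.

Lemma Ex0 : Ex 0 = 1.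
Proof. by rewrite /Ex cos0 sin0. Qed.

Lemma ExN x : Ex x * Ex (- x) = 1.
Proof. by rewrite -ExD subrr Ex0. Qed.

Lemma Ex_neq0 x : Ex x != 0.
Proof. by apply/eqP => h; have := ExN x; rewrite h mul0r => /eqP; rewrite eq_sym oner_eq0. Qed.

Lemma ExMn x k : Ex (k%:R * x) = Ex x ^+ k.
Proof.
elim: k => [|k IH]; first by rewrite mul0r Ex0 expr0.
by rewrite mulrS mulrDl mul1r ExD IH exprS.
Qed.

Lemma Expi : Ex pi = -1.
Proof. by rewrite /Ex cospi sinpi complexr0 rmorphN1. Qed.

Lemma normEx x : `|Ex x| = 1.
Proof.
rewrite normc_def /= cos2Dsin2.
by rewrite sqrtr1.
Qed.

Lemma cvgC (u : nat -> R) (l : R) : u @ \oo --> l -> (fun k => (u k)%:C : CC) @ \oo --> (l%:C : CC).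
Proof.
move=> /cvgrPdist_lt hu; apply/cvgrPdist_lt => e he.
have hr : e \is Num.real by apply: gtr0_real.
have he' : 0 < complex.Re e by rewrite -ltcR RRe_real.
near=> k.
have hk : `|l - u k| < complex.Re e by near: k; apply: hu.
rewrite -(RRe_real hr) -rmorphB normc_def /= expr0n /= addr0 sqrtr_sqr.
by rewrite ltcR.
Unshelve. all: end_near.
Qed.

Lemma exp_term (th : R) k : ((k`!)%:R^-1 : R[i]) * ('i * th%:C)^+k =
  (cos_coeff th k)%:C + 'i * (sin_coeff th k)%:C.
Proof.
have hk : k = (odd k + (k./2).*2)%N by rewrite odd_double_half.
have ei : 'i ^+ k = 'i ^+ (odd k) * (-1) ^+ (k./2) :> R[i].
  by rewrite {1}hk exprD -muln2 mulnC exprM sqr_i.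
rewrite /cos_coeff /sin_coeff /= exprMn ei.
case ho: (odd k) => /=.
  have -> : k.-1./2 = k./2 by rewrite {1}hk ho /= doubleK.
  rewrite !rmorphM /= !rmorphXn /= fmorphV /= !rmorph_nat /= rmorphN1.
  ring.
rewrite !rmorphM /= !rmorphXn /= fmorphV /= !rmorph_nat /= rmorphN1.
ring.
Qed.

Lemma cvg_expi (th : R) :
  (fun M => \sum_(k < M) ((k`!)%:R^-1 : R[i]) * ('i * th%:C)^+k : CC) @ \oo --> (Ex th : CC).
Proof.
have hc : series (cos_coeff th) @ \oo --> cos th.
  rewrite cos.unlock; exact: is_cvg_series_cos_coeff.
have hs : series (sin_coeff th) @ \oo --> sin th.
  rewrite sin.unlock; exact: is_cvg_series_sin_coeff.
rewrite (_ : (fun M => _) = (fun M => ((series (cos_coeff th) M)%:C : CC) + 'i * (series (sin_coeff th) M)%:C)).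
  rewrite ExE.
  have h1 := cvgC _ _ hc. have h2 := cvgC _ _ hs.
  have h3 : ((series (sin_coeff th) x)%:C * 'i : CC) @[x --> \oo] --> ((sin th)%:C * 'i : CC).
    exact: (cvgMl h2).
  have h4 := cvgD h1 h3.
  rewrite mulrC; under eq_fun do rewrite mulrC.
  exact: h4.
apply/funext => M; rewrite /series /= !big_mkord !rmorph_sum /= mulr_sumr -big_split /=.
by apply: eq_bigr => k _; rewrite exp_term.
Qed.

End Cplx.

Section Evol.
Variable R : realType.
Local Open Scope complex_scope.
Variable n : nat.
Variable J : 'M[R]_n.+1.
Variable lam : 'I_n.+1 -> R.
Hypothesis lam_inj : injective lam.
Hypothesis eig : forall i, eigenvalue J (lam i).
Local Notation P := (Pm R n J lam).

Lemma cmxM (A B : 'M[R]_n.+1) : cmx (A *m B) = cmx A *m cmx B.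
Proof. exact: (map_mxM (real_complex R)). Qed.

Lemma cmxZ c (A : 'M[R]_n.+1) : cmx (c *: A) = c%:C *: cmx A.
Proof. exact: (map_mxZ (real_complex R)). Qed.

Lemma cmx_sum (I : Type) (r : seq I) (F : I -> 'M[R]_n.+1) :
  cmx (\sum_(i <- r) F i) = \sum_(i <- r) cmx (F i).
Proof. exact: (map_mx_sum (real_complex R)). Qed.

Lemma cmx1 : cmx (1 : 'M[R]_n.+1) = 1.
Proof. exact: (map_mx1 (real_complex R)). Qed.

Lemma cmxX (A : 'M[R]_n.+1) k : cmx (A ^+ k) = cmx A ^+ k.
Proof.
elim: k => [|k IH]; first by rewrite !expr0 cmx1.
by rewrite !exprS -!mulmxE cmxM IH.
Qed.

Lemma evolE t : evol J t = \sum_j Ex R (- (t * lam j)) *: cmx (P j).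
Proof.
rewrite /evol /expmx.
have hS : forall M, \sum_(k < M) ((k`!)%:R^-1 : R[i]) *: ((- 'i * t%:C) *: cmx J) ^+ k =
   \sum_j ((\sum_(k < M) ((k`!)%:R^-1 : R[i]) * ('i * (- (t * lam j))%:C)^+k) *: cmx (P j)).
  move=> M.
  under eq_bigr do rewrite exprZn -cmxX (Jpow R n J lam lam_inj eig) cmx_sum scaler_sumr scaler_sumr.
  rewrite exchange_big /=; apply: eq_bigr => j _.
  rewrite scaler_suml; apply: eq_bigr => k _.
  rewrite cmxZ !scalerA; congr (_ *: _).
  rewrite -mulrA; congr (_ * _).
  rewrite rmorphXn -exprMn; congr (_ ^+ _).
  rewrite rmorphN rmorphM /=; ring.
rewrite (_ : (fun m => _) = (fun M => \sum_j ((\sum_(k < M) ((k`!)%:R^-1 : R[i]) * ('i * (- (t * lam j))%:C)^+k) *: cmx (P j)))); last first.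
  by apply/funext => M; rewrite hS.
have H : (fun M => \sum_j ((\sum_(k < M) ((k`!)%:R^-1 : R[i]) * ('i * (- (t * lam j))%:C)^+k) *: cmx (P j)) : 'M[CC R]_n.+1) @ \oo --> (\sum_j Ex R (- (t * lam j)) *: cmx (P j) : 'M[CC R]_n.+1).
  apply: cvg_bigsum => j.
  apply: cvgZl.
  exact: cvg_expi.
exact: (cvg_lim _ H).
Qed.

End Evol.

Section Main.
Variable R : realType.
Local Open Scope complex_scope.
Variables (N : nat) (a b : nat -> R) (lam : 'I_N.+1 -> R).
Local Notation J := (jacobi N a b).
Hypothesis lam_inj : injective lam.
Hypothesis eig : forall i, eigenvalue J (lam i).
Hypothesis hb : forall l, (l < N)%N -> 0 < b l.
Variables (d l0 : R).
Hypothesis hd : 0 < d.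
Hypothesis hlin : forall j : 'I_N.+1, lam j = l0 + (j:nat)%:R * d.
Local Notation P := (Pm R N J lam).
Local Notation cP j := (cmx (P j)).
Local Notation E := (Ex R).

Definition Bp := \prod_(l < N) b l.
Definition Kf (j : 'I_N.+1) : R := ((j:nat)`! * (N - j)`!)%:R.
Definition Wf j := Bp / (d ^+ N * Kf j).
Definition sg (j : 'I_N.+1) : R := (-1) ^+ (N - j).

Lemma Bp_gt0 : 0 < Bp.
Proof. by apply: prodr_gt0 => l _; apply: hb. Qed.

Lemma Kf_gt0 j : 0 < Kf j.
Proof. by rewrite /Kf ltr0n muln_gt0 !fact_gt0. Qed.

Lemma Wf_gt0 j : 0 < Wf j.
Proof. by rewrite /Wf divr_gt0 ?Bp_gt0 // mulr_gt0 ?exprn_gt0 ?Kf_gt0. Qed.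

Lemma sg2 j : sg j * sg j = 1.
Proof. by rewrite /sg -expr2 -exprM mulnC exprM sqrrN expr1n expr1n. Qed.

Lemma Dj_form j : Dj R N lam j = d ^+ N * (sg j * Kf j).
Proof.
rewrite /Dj (eq_bigr (fun i : 'I_N.+1 => (((j:nat)%:R - (i:nat)%:R) * d))); last first.
  by move=> i _; rewrite !hlin; ring.
rewrite big_split /= Dprod prodr_const cardC1 card_ord /= mulrC.
by rewrite /sg /Kf.
Qed.

Lemma c_form j : P j ord_max 0 = sg j * Wf j.
Proof.
rewrite (P_N0 R N a b lam lam_inj) Dj_form -/Bp /Wf.
have hK := Kf_gt0 j.
have hdN : d ^+ N != 0 by rewrite expf_neq0 // gt_eqF.
rewrite /sg -signr_odd; case: odd => /=; rewrite ?expr1 ?expr0; field.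
  by rewrite hdN !pnatr_eq0 -!lt0n !fact_gt0.
by rewrite hdN !pnatr_eq0 -!lt0n !fact_gt0.
Qed.

Lemma mul_evec (M : 'M[R[i]]_N.+1) (k i : 'I_N.+1) : (M *m evec k) i 0 = M i k.
Proof.
rewrite mxE (bigD1 k) //= big1 ?addr0.
  by rewrite /evec mxE !eqxx mulr1.
by move=> l hl; rewrite /evec mxE (negbTE hl) mulr0.
Qed.

Lemma scale_entry (c : R[i]) (A : 'cV[R[i]]_N.+1) i : (c *: A) i 0 = c * A i 0.
Proof. by rewrite mxE. Qed.

Lemma normCr (x : R) : `|x%:C| = `|x|%:C.
Proof. by rewrite normc_def /= expr0n /= addr0 sqrtr_sqr. Qed.

Lemma cmx0 : cmx (0 : 'M[R]_N.+1) = 0.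
Proof. by apply/matrixP => i j; rewrite !mxE. Qed.

Lemma proj_evol T j : cP j *m evol J T = E (- (T * lam j)) *: cP j.
Proof.
rewrite (evolE R N J lam lam_inj eig) mulmx_sumr (bigD1 j) //= big1 ?addr0.
  by rewrite -scalemxAr -cmxM mulmxE (PP R N J lam lam_inj eig) eqxx scale1r.
move=> k hk; rewrite -scalemxAr -cmxM mulmxE (PP R N J lam lam_inj eig).
by rewrite eq_sym (negbTE hk) scale0r cmx0 scaler0.
Qed.

Lemma sum_cP : \sum_j cP j = 1.
Proof. by rewrite -cmx_sum (sumP R N J lam lam_inj) cmx1. Qed.

Lemma cinner_e0 (u : 'cV[R[i]]_N.+1) : cinner u (evec 0) = u 0 0.
Proof.
rewrite /cinner (bigD1 0) //= big1 ?addr0.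
  by rewrite /evec mxE !eqxx /= rmorph1 mulr1.
by move=> i hi; rewrite /evec mxE (negbTE hi) /= rmorph0 mulr0.
Qed.

Section PST.
Variables (T0 phi : R).
Hypothesis hP0 : evol J T0 *m evec 0 = (cos phi +i* sin phi) *: evec ord_max.

Lemma step2 j : E (- (T0 * lam j)) *: (cP j *m evec 0) = E phi *: (cP j *m evec ord_max).
Proof.
have h := congr1 (mulmx (cP j)) hP0.
by rewrite mulmxA proj_evol -scalemxAl in h; rewrite h scalemxAr.
Qed.

Lemma step3 j : E (- (T0 * lam j)) * (P j 0 0)%:C = E phi * (sg j * Wf j)%:C.
Proof.
have h := congr1 (fun M : 'cV[R[i]]_N.+1 => M 0 0) (step2 j).
rewrite /= !scale_entry !mul_evec !mxE in h.
rewrite h -c_form; congr (_ * (_)%:C).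
by rewrite -{1}(P_sym R N a b lam) mxE.
Qed.

Lemma w_form j : P j 0 0 = Wf j.
Proof.
have h := congr1 (@Num.norm _ (R[i] : numDomainType)) (step3 j).
rewrite !normrM !normEx !mul1r !normCr in h.
case: h; rewrite normrM /sg normrX normrN1 expr1n mul1r.
by move=> h; rewrite -(ger0_norm (P00_ge0 R N a b lam lam_inj eig j)) h gtr0_norm // Wf_gt0.
Qed.

Lemma E_T0 j : E (- (T0 * lam j)) = E phi * (sg j)%:C.
Proof.
have h := step3 j.
rewrite w_form in h.
have hW : (Wf j)%:C != 0.
  by apply/eqP => h0; case: h0 => h0; move: (Wf_gt0 j); rewrite h0 ltxx.
apply: (mulIf hW); by rewrite h rmorphM /= mulrA.
Qed.

Lemma step6 j : cP j *m evec ord_max = (sg j)%:C *: (cP j *m evec 0).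
Proof.
have h := step2 j.
rewrite E_T0 -scalerA in h.
by apply: (scalerI (Ex_neq0 R phi)); rewrite -h.
Qed.

End PST.

Section ESE.
Variables (T0 phi t : R).
Hypothesis hP0 : evol J T0 *m evec 0 = (cos phi +i* sin phi) *: evec ord_max.
Hypothesis hN : (0 < N)%N.
Hypothesis hE : cinner (evol J t *m evec 0) (evec 0) = 0.

Lemma ese_sum : \sum_j E (- (t * lam j)) * (Wf j)%:C = 0.
Proof.
rewrite -[RHS]hE cinner_e0 mul_evec (evolE R N J lam lam_inj eig) summxE.
apply: eq_bigr => j _; rewrite mxE mxE.
by rewrite (w_form T0 phi hP0).
Qed.

Lemma E_lin j : E (- (t * lam j)) = E (- (t * l0)) * E (- (t * d)) ^+ j.
Proof.
rewrite hlin.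
have -> : - (t * (l0 + (j:nat)%:R * d)) = - (t * l0) + (j:nat)%:R * (- (t * d)) by ring.
by rewrite ExD ExMn.
Qed.

Lemma z_eq : E (- (t * d)) = -1.
Proof.
set z := E (- (t * d)).
set c := E (t * l0) * (d ^+ N * (N`!)%:R / Bp)%:C.
have hterm : forall j : 'I_N.+1, z ^+ j *+ 'C(N, j) = c * (E (- (t * lam j)) * (Wf j)%:C).
  move=> j; rewrite E_lin /c.
  have hEE : E (t * l0) * E (- (t * l0)) = 1 by rewrite ExN.
  rewrite -mulr_natr.
  have -> : ('C(N, j))%:R = ((d ^+ N * (N`!)%:R / Bp) * Wf j)%:C :> R[i].
    rewrite -(rmorph_nat (real_complex R)); congr (_ %:C).
    rewrite /Wf /Kf -(bin_fact (leq_ord j)) natrM.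
    have hdN : d ^+ N != 0 by rewrite expf_neq0 // gt_eqF.
    have hB : Bp != 0 by rewrite gt_eqF // Bp_gt0.
    field.
    by rewrite hdN hB !pnatr_eq0 -!lt0n !fact_gt0.
  rewrite rmorphM /=.
  transitivity ((E (t * l0) * E (- (t * l0))) * z ^+ j * ((d ^+ N * (N`!)%:R / Bp)%:C * (Wf j)%:C)).
    by rewrite hEE mul1r.
  ring.
have h1 : (z + 1) ^+ N = 0.
  rewrite exprD1n (eq_bigr _ (fun j _ => hterm j)) -mulr_sumr ese_sum mulr0 //.
have : (z + 1 == 0) by move: h1 => /eqP; rewrite expf_eq0 hN.
by rewrite addr_eq0 => /eqP.
Qed.

Lemma final : evol J t *m evec 0 = E (- (t * l0) + N%:R * pi) *: evec ord_max.
Proof.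
rewrite (evolE R N J lam lam_inj eig) mulmx_suml.
rewrite (eq_bigr (fun j => (E (- (t * l0)) * (-1) ^+ N) *: (cP j *m evec ord_max))); last first.
  move=> j _; rewrite -scalemxAl E_lin z_eq.
  have -> : cP j *m evec 0 = (sg j)%:C *: (cP j *m evec ord_max).
    by rewrite (step6 T0 phi hP0) scalerA -rmorphM /= sg2 scale1r.
  rewrite scalerA /sg rmorphXn /= rmorphN1 -mulrA -exprD subnKC //.
  by rewrite -ltnS ltn_ord.
by rewrite -scaler_sumr -mulmx_suml sum_cP mul1mx ExD ExMn Expi.
Qed.

End ESE.

End Main.

End Helpers.

Theorem mainTheorem3 (R : realType) (N : nat) (a b : nat -> R)
  (lambda : 'I_N.+1 -> R) :
  (1 <= N)%N ->
  jacobi_params N a b ->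
  persymmetric_params N a b ->
  (exists T : R, PST_at (jacobi N a b) T) ->
  (forall i j : 'I_N.+1, (i < j)%N -> lambda i < lambda j) ->
  (forall x : R, eigenvalue (jacobi N a b) x <-> exists i, x = lambda i) ->
  (forall k : nat, (k < N)%N ->
      lambda (inord k.+1) - lambda (inord k) = lambda (inord 1) - lambda (inord 0)) ->
  forall T0 : R, earliest_PST (jacobi N a b) T0 ->
  ~ (exists t : R, ESE_at (jacobi N a b) T0 t).
Proof.
move=> hN hjac _ _ hmono heig hgap T0 [[hT0 [phi hP0]] hmin] [t [ht0 [htT0 hE]]].
have lam_inj : injective lambda.
  move=> i j h; apply/val_inj/eqP; case: (ltngtP i j) => // h'.
    by have := hmono _ _ h'; rewrite h ltxx.
  by have := hmono _ _ h'; rewrite h ltxx.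
have eig : forall i, eigenvalue (jacobi N a b) (lambda i) by move=> i; apply/heig; exists i.
set d := lambda (inord 1) - lambda (inord 0).
have hd : 0 < d.
  rewrite /d subr_gt0; apply: hmono; rewrite !inordK //.
have hlin0 : forall k, (k <= N)%N -> lambda (inord k) = lambda (inord 0) + k%:R * d.
  elim => [|k IH] hk; first by rewrite mul0r addr0.
  have := hgap k hk; rewrite -/d => h.
  by rewrite -[lambda (inord k.+1)](subrK (lambda (inord k))) h IH ?(ltnW hk) // mulrS; ring.
have hlin : forall j : 'I_N.+1, lambda j = lambda (inord 0) + (j:nat)%:R * d.
  by move=> j; rewrite -hlin0 ?inord_val // -ltnS ltn_ord.
have hb : forall l, (l < N)%N -> 0 < b l by move=> l hl; apply: hjac.
have hF := Helpers.final R N a b lambda lam_inj eig hb d (lambda (inord 0)) hd hlin T0 phi t hP0 hN hE.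
have : T0 <= t by apply: hmin; split => //; eexists; exact: hF.
by rewrite leNgt htT0.
Qed.
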